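(* Let $A$ be a nonempty finite set of $n$ alternatives and let $\mathcal{F}$ be a nonempty collection of nonempty subsets of $A$ that is downward closed (if $S\in\mathcal{F}$ and $\emptyset\neq S'\subseteq S$ then $S'\in\mathcal{F}$) and contains every singleton $\{a\}$, $a\in A$. A feasibility-constrained choice rule $C$ is (capacity-constrained) lexicographic if and only if it satisfies $\mathcal{F}$-capacity-filling, monotonicity, and the capacity-wise strong axiom of revealed preference (CSARP).
   Context: Let $\mathcal{A}$ be the set of all nonempty subsets of $A$. A feasibility-constrained choice rule is a map $C$ assigning to each $(S,q)\in\mathcal{A}\times\{1,\dots,n\}$ a nonempty set $C(S,q)\subseteq S$ with $C(S,q)\in\mathcal{F}$ and $|C(S,q)|\le q$. Set $C(S,0)=\emptyset$ by convention. A priority ordering is a complete, transitive and antisymmetric binary relation on $A$; a priority profile is a list $(\succ_1,\dots,\succ_n)$ of priority orderings. $C$ is (capacity-constrained) lexicographic if there exists a priority profile $(\succ_1,\dots,\succ_n)$ such that for each $(S,q)$, $C(S,q)$ is obtained as follows: choose the $\succ_1$-highest alternative of $S$; then, for $k=2,\dots,q$, as long as some remaining alternative exists whose addition to the previously chosen alternatives gives a set in $\mathcal{F}$, choose the $\succ_k$-highest alternative among those remaining alternatives of $S$ that form a set in $\mathcal{F}$ together with the previously chosen ones. $\mathcal{F}$-capacity-filling: for each $(S,q)$ and $a\in S$, if $a\notin C(S,q)$ then either $|C(S,q)|=q$ or $C(S,q)\cup\{a\}\notin\mathcal{F}$. Monotonicity: for each $S\in\mathcal{A}$ and $q\in\{1,\dots,n-1\}$,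 $C(S,q)\subseteq C(S,q+1)$. For $q\in\{1,\dots,n\}$ and $a,b\in A$, write $a\mathrel{R^{\mathcal{F}}_q} b$ if there exists $S\in\mathcal{A}$ with $a,b\in S$, $a,b\notin C(S,q-1)$, $a\in C(S,q)$, $b\notin C(S,q)$, and $C(S,q-1)\cup\{b\}\in\mathcal{F}$. CSARP: for each $q\in\{1,\dots,n\}$ the relation $R^{\mathcal{F}}_q$ is acyclic. *)

(* Defs.v *)
From mathcomp Require Import all_boot.
Set Implicit Arguments. Unset Strict Implicit. Unset Printing Implicit Defensive.

Section Defs.
Variable A : finType.

Definition feasibility_collection (F : {set {set A}}) : Prop :=
  [/\ F != set0,
      set0 \notin F,
      (forall S S' : {set A}, S \in F -> S' != set0 -> S' \subset S -> S' \in F)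
    & (forall a : A, [set a] \in F)].

Definition Cz (C : {set A} -> nat -> {set A}) (S : {set A}) (q : nat) : {set A} :=
  if q == 0 then set0 else C S q.

Definition choice_rule (F : {set {set A}}) (C : {set A} -> nat -> {set A}) : Prop :=
  forall S : {set A}, S != set0 -> forall q, 1 <= q <= #|A| ->
    [/\ C S q != set0, C S q \subset S, C S q \in F & #|C S q| <= q].

Definition priority_ordering (r : rel A) : Prop :=
  [/\ (forall a b, r a b || r b a),
      (forall a b c, r a b -> r b c -> r a c)
    & (forall a b, r a b -> r b a -> a = b)].

Definition highest (r : rel A) (T : {set A}) : option A :=
  [pick a in T | [forall b in T, r a b]].

Definition lex_step (F : {set {set A}}) (r : rel A) (S X : {set A}) : {set A} :=
  let T := [set a in S | (a \notin X) && ((a |: X) \in F)] in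
  match highest r T with Some a => a |: X | None => X end.

Definition lex_run (F : {set {set A}}) (p : nat -> rel A) (S : {set A}) (q : nat)
  : {set A} :=
  foldl (fun X k => lex_step F (p k) S X) set0 (iota 1 q).

Definition lexicographic (F : {set {set A}}) (C : {set A} -> nat -> {set A}) : Prop :=
  exists p : nat -> rel A,
    (forall k, 1 <= k <= #|A| -> priority_ordering (p k)) /\
    (forall S : {set A}, S != set0 -> forall q, 1 <= q <= #|A| ->
        C S q = lex_run F p S q).

Definition capacity_filling (F : {set {set A}}) (C : {set A} -> nat -> {set A}) : Prop :=
  forall S : {set A}, S != set0 -> forall q, 1 <= q <= #|A| ->
    forall a, a \in S -> a \notin C S q ->
      #|C S q| = q \/ (C S q :|: [set a]) \notin F.

Definition monotone (C : {set A} -> nat -> {set A}) : Prop :=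
  forall S : {set A}, S != set0 -> forall q, 1 <= q <= #|A| - 1 ->
    C S q \subset C S q.+1.

Definition Rq (F : {set {set A}}) (C : {set A} -> nat -> {set A}) (q : nat) : rel A :=
  fun a b => [exists S : {set A},
    [&& S != set0, a \in S, b \in S,
        a \notin Cz C S q.-1, b \notin Cz C S q.-1,
        a \in C S q, b \notin C S q &
        (Cz C S q.-1 :|: [set b]) \in F]].

Definition acyclic (R : rel A) : Prop :=
  forall a b, R a b -> ~~ connect R b a.

Definition CSARP (F : {set {set A}}) (C : {set A} -> nat -> {set A}) : Prop :=
  forall q, 1 <= q <= #|A| -> acyclic (Rq F C q).

End Defs.

(* Main.v *)
Require Import Defs.
From mathcomp Require Import all_boot.
From mathcomp Require Import zify.
Set Implicit Arguments. Unset Strict Implicit. Unset Printing Implicit Defensive.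

Section Proofs.
Variable A : finType.
Implicit Types (F : {set {set A}}) (S X T : {set A}) (r : rel A).

Lemma po_refl r : priority_ordering r -> forall a, r a a.
Proof. by case=> tot _ _ a; have := tot a a; rewrite orbb. Qed.

Lemma ex_max r (s : seq A) : priority_ordering r -> s != [::] ->
  exists2 a, a \in s & forall b, b \in s -> r a b.
Proof.
move=> po; have [tot tr _] := po.
elim: s => [//|x s IH] _.
case: s IH => [|y s] IH.
  by exists x; rewrite ?mem_head // => b; rewrite inE => /eqP ->; apply: po_refl.
have [a ain amax] := IH isT.
case/orP: (tot x a) => hxa.
  exists x; first exact: mem_head.
  move=> b; rewrite in_cons => /orP[/eqP ->|bin]; first exact: po_refl.
  exact: tr hxa (amax _ bin).
exists a; first by rewrite in_cons ain orbT.
move=> b; rewrite in_cons => /orP[/eqP ->|bin]; first exact: hxa.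
exact: amax.
Qed.

Lemma highest_None r T : priority_ordering r -> highest r T = None -> T = set0.
Proof.
move=> po; rewrite /highest; case: pickP => // H _.
apply/setP => b; rewrite inE; apply/negbTE/negP => bT.
have ne : enum T != [::] by apply/eqP => e; have := mem_enum T b; rewrite e in_nil bT.
have [a ain amax] := ex_max po ne.
have := H a; rewrite -mem_enum ain /= => /negbT/negP; apply.
by apply/forall_inP => c cT; apply: amax; rewrite mem_enum.
Qed.

Lemma highest_Some r T a : highest r T = Some a -> a \in T /\ forall b, b \in T -> r a b.
Proof. by rewrite /highest; case: pickP => // x /andP[xT /forall_inP H] [<-]. Qed.

Lemma lex_run_S F p S q :
  lex_run F p S q.+1 = lex_step F (p q.+1) S (lex_run F p S q).
Proof.
rewrite /lex_run.
have -> : iota 1 q.+1 = iota 1 q ++ [:: q.+1] by have := iotaD 1 q 1; rewrite addn1 add1n /= => ->.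
by rewrite foldl_cat.
Qed.


Lemma lex_step_sub F r S X : X \subset lex_step F r S X.
Proof. by rewrite /lex_step /=; case: highest => [a|]; rewrite ?subsetUr. Qed.

Lemma lex_inv F p S q : (forall k, 1 <= k <= q -> priority_ordering (p k)) ->
  #|lex_run F p S q| = q \/
  [set a in S | (a \notin lex_run F p S q) && ((a |: lex_run F p S q) \in F)] = set0.
Proof.
elim: q => [|q IH] po; first by left; rewrite /lex_run /= cards0.
have po' : forall k, 1 <= k <= q -> priority_ordering (p k).
  by move=> k /andP[k1 kq]; apply: po; rewrite k1 ltnW.
have poq : priority_ordering (p q.+1) by apply: po; rewrite leqnn.
rewrite lex_run_S; set X := lex_run F p S q.
rewrite /lex_step /=.
case E : (highest _ _) => [a|].
  have [aT _] := highest_Some E.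
  move: aT; rewrite inE => /and3P[aS aX aF].
  case: (IH po') => [cX|T0].
    by left; rewrite cardsU1 aX cX.
  by move: T0 => /setP/(_ a); rewrite !inE aS aX aF.
by right; apply: highest_None E.
Qed.


Lemma forward F C : 0 < #|A| -> feasibility_collection F -> choice_rule F C ->
  lexicographic F C -> [/\ capacity_filling F C, monotone C & CSARP F C].
Proof.
move=> n0 hF hC [p [po eqC]].
have po' q : q <= #|A| -> forall k, 1 <= k <= q -> priority_ordering (p k).
  by move=> qn k /andP[k1 kq]; apply: po; rewrite k1 (leq_trans kq qn).
have CzE S : S != set0 -> forall q, q <= #|A| -> Cz C S q = lex_run F p S q.
  move=> S0 q qn; rewrite /Cz; case: eqP => [->|/eqP q0]; first by [].
  by apply: eqC => //; rewrite lt0n q0 qn.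
split.
- move=> S S0 q /andP[q1 qn] a aS aC.
  rewrite (eqC S S0 q) ?q1 ?qn // in aC *.
  case: (lex_inv F S (po' q qn)) => [->|T0]; [by left|right].
  move: T0 => /setP/(_ a); rewrite !inE aS aC /= => /negbT.
  by rewrite setUC.
- move=> S S0 q /andP[q1 qn].
  have qn' : q.+1 <= #|A| by move: qn n0; clear; lia.
  rewrite (eqC S S0 q) ?q1 ?(ltnW qn') // (eqC S S0 q.+1) ?qn' //.
  by rewrite lex_run_S lex_step_sub.
case=> [//|q] /andP[_ qn].
have poq := po q.+1 qn.
have [_ tr anti] := poq.
have key : forall x y, Rq F C q.+1 x y -> p q.+1 x y && (x != y).
  move=> x y /existsP[S /andP[S0 /andP[xS /andP[yS /andP[xX /andP[yX /andP[xC /andP[yC XF]]]]]]]].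
  have EX := CzE S S0 q (ltnW qn).
  move: xX yX XF; rewrite /= EX => xX yX XF.
  have EY := eqC S S0 q.+1 qn.
  move: xC yC; rewrite EY lex_run_S /lex_step /=.
  case E: highest => [c|]; last by rewrite (negbTE xX).
  have [cT cmax] := highest_Some E.
  rewrite !in_setU1 (negbTE xX) (negbTE yX) !orbF => /eqP -> ync.
  rewrite eq_sym ync andbT; apply: cmax.
  by rewrite inE yS yX /= setUC.
have pconn : forall x y, connect (Rq F C q.+1) x y -> p q.+1 x y.
  move=> x y /connectP[s]; elim: s x => [|z s IHs] x /=.
    by move=> _ ->; apply: po_refl.
  move=> /andP[/key/andP[pxz _] pth] ey.
  exact: tr pxz (IHs z pth ey).
move=> a b Rab; apply/negP => /pconn pba.
have /andP[pab nab] := key _ _ Rab.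
by rewrite (anti _ _ pab pba) eqxx in nab.
Qed.


Definition hgt F C k (a : A) := #|[set x | connect (Rq F C k) a x]|.
Definition key F C k (a : A) := hgt F C k a * #|A| + enum_rank a.
Definition pk F C k : rel A := fun a b => key F C k b <= key F C k a.

Lemma key_inj F C k : injective (key F C k).
Proof.
move=> a b e.
have : key F C k a %% #|A| = key F C k b %% #|A| by rewrite e.
rewrite /key !modnMDl !modn_small ?ltn_ord // => /val_inj.
exact: enum_rank_inj.
Qed.

Lemma pk_po F C k : priority_ordering (pk F C k).
Proof.
split.
- by move=> a b; rewrite /pk leq_total.
- by move=> a b c h1 h2; rewrite /pk (leq_trans h2 h1).
- move=> a b h1 h2; apply: (key_inj (F:=F) (C:=C) (k:=k)); apply/eqP; rewrite eqn_leq; apply/andP; split; [exact: h2 | exact: h1].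
Qed.

Lemma key_lt F C k a b : acyclic (Rq F C k) -> Rq F C k a b ->
  key F C k b < key F C k a.
Proof.
move=> ac Rab.
have hlt : hgt F C k b < hgt F C k a.
  apply: proper_card; apply/properP; split.
    apply/subsetP => x; rewrite !inE => cbx.
    exact: connect_trans (connect1 Rab) cbx.
  exists a; first by rewrite inE connect0.
  by rewrite inE; apply: ac.
rewrite /key; apply: (@leq_trans ((hgt F C k b).+1 * #|A|)).
  by rewrite mulSn addnC -addSn leq_add2r ltn_ord.
by apply: leq_trans (leq_addr _ _); rewrite leq_mul2r hlt orbT.
Qed.


Lemma backward F C : 0 < #|A| -> feasibility_collection F -> choice_rule F C ->
  [/\ capacity_filling F C, monotone C & CSARP F C] -> lexicographic F C.
Proof.
move=> n0 [_ _ down single] hC [cap mono csarp].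
exists (pk F C); split; first by move=> k _; apply: pk_po.
suff main : forall S, S != set0 -> forall q, q <= #|A| ->
    Cz C S q = lex_run F (pk F C) S q.
  move=> S S0 q /andP[q1 qn]; rewrite -main //.
  by rewrite /Cz eqn0Ngt q1.
move=> S S0; elim=> [//|q IH] qn.
have {}IH := IH (ltnW qn).
rewrite lex_run_S -IH.
set X := Cz C S q.
have -> : Cz C S q.+1 = C S q.+1 by [].
set Y := C S q.+1.
have [Y0 YS YF Yq] := hC S S0 q.+1 qn.
have XY : X \subset Y.
  rewrite /X /Cz; case: eqP => [_|/eqP q0]; first exact: sub0set.
  apply: mono => //; apply/andP; split; first by rewrite lt0n.
  by move: qn; clear; lia.
have Xq : #|X| <= q.
  rewrite /X /Cz; case: eqP => [_|/eqP q0]; first by rewrite cards0.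
  have qr : 1 <= q <= #|A| by rewrite lt0n q0 ltnW.
  by have [_ _ _] := hC S S0 q qr.
have Xfill : 0 < q -> #|X| != q -> forall a, a \in S -> a \notin X ->
    (X :|: [set a]) \notin F.
  move=> q0 Xn a aS aX.
  have XE : X = C S q by rewrite /X /Cz eqn0Ngt q0.
  rewrite XE in Xn aX *.
  have qr : 1 <= q <= #|A| by rewrite q0 ltnW.
  case: (cap S S0 q qr a aS aX) => [e|//].
  by rewrite e eqxx in Xn.
rewrite /lex_step /=.
set T := [set a in S | (a \notin X) && ((a |: X) \in F)].
have [e|/set0Pn[c]] := eqVneq (Y :\: X) set0.
  have YX : Y = X by apply/eqP; rewrite eqEsubset XY andbT -setD_eq0 e eqxx.
  have T0 : T = set0.
    apply/setP => a; rewrite !inE; apply/negbTE; apply/andP => [[aS /andP[aX aF]]].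
    have aY : a \notin Y by rewrite YX.
    case: (cap S S0 q.+1 qn a aS aY) => [e'|].
      by move: Xq; rewrite -YX e' ltnn.
    by move=> /negP; apply; rewrite -/Y YX setUC.
  rewrite T0.
  have -> : highest (pk F C q.+1) set0 = None.
    by rewrite /highest; case: pickP => // x; rewrite inE.
  exact YX.
rewrite inE => /andP[cX cY].
have cS : c \in S := subsetP YS c cY.
have YE : Y = c |: X.
  apply/setP => d; rewrite in_setU1.
  case: (eqVneq d c) => [->|dc]; first by rewrite cY.
  case dX: (d \in X); first by rewrite (subsetP XY d dX).
  apply/negbTE/negP => dY.
  have sub2 : [set c; d] \subset Y :\: X.
    by apply/subsetP => x; rewrite !inE => /orP[]/eqP->; rewrite ?cX ?cY ?dX ?dY.
  have := subset_leq_card sub2.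
  rewrite cards2 eq_sym dc cardsD (setIidPr XY) => h2.
  have qpos : 0 < q.
    by move: h2 Yq; move: (#|Y|) (#|X|) => y x; clear; lia.
  have Xn : #|X| != q.
    by apply/eqP => e'; move: h2 Yq; rewrite e'; move: (#|Y|) => y; clear; lia.
  have := Xfill qpos Xn c cS cX; apply/negP/negPn.
  apply: (down Y) => //.
    by apply/set0Pn; exists c; rewrite !inE eqxx orbT.
  by rewrite subUset XY sub1set cY.
have cT : c \in T by rewrite inE cS cX /= -YE.
have cmax : forall b, b \in T -> pk F C q.+1 c b.
  move=> b; case: (eqVneq b c) => [-> _|bc]; first exact: po_refl (pk_po _ _ _) _.
  rewrite inE => /and3P[bS bX bF]; rewrite /pk ltnW //; apply: key_lt.
    by apply: csarp.
  apply/existsP; exists S; rewrite S0 cS bS /= -/X -/Y.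
  by rewrite cX bX cY YE in_setU1 (negbTE bc) (negbTE bX) setUC bF.
case E: (highest _ T) => [x|]; last first.
  by move: (highest_None (pk_po F C q.+1) E) cT => ->; rewrite inE.
have [xT xmax] := highest_Some E.
have [_ _ anti] := pk_po F C q.+1.
by rewrite (anti _ _ (xmax c cT) (cmax x xT)).
Qed.

End Proofs.

Theorem proposition2 (A : finType) (F : {set {set A}})
    (C : {set A} -> nat -> {set A}) :
  0 < #|A| ->
  feasibility_collection F ->
  choice_rule F C ->
  (lexicographic F C <-> [/\ capacity_filling F C, monotone C & CSARP F C]).
Proof.
move=> n0 hF hC; split; [exact: forward | exact: backward].
Qed.
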